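(* Let $G$ be a graph, $\mathcal{B}$ a set of balls of $G$, $X\subset V(G)$ and $\mathcal{H}$ the set of connected components of $G-X$. Let $u\in V(G)$, $B=B_r(u)\in\mathcal{B}$, and let $T$ be a positive non-clashing teaching map for $\mathcal{B}$. Suppose there exist $H_0\in\mathcal{H}$ and $v\in V(H_0)$ such that $|[v]_{\sim_{\mathcal{B}}}\cap T(B)|\ge 3$. Then there exists $z\in [v]_{\sim_{\mathcal{B}}}\cap T(B)$ such that the map obtained from $T$ by replacing $T(B)$ with $T(B)\setminus\{z\}$ is a positive non-clashing teaching map for $\mathcal{B}$.
   Context: For a graph $G$, $r\ge 0$ and $v\in V(G)$, the ball $B_r(v)$ is the set of vertices at distance at most $r$ from $v$. For a set $\mathcal{B}$ of balls, a positive teaching map $T$ assigns to each $B\in\mathcal{B}$ a set $T(B)\subseteq B$; $T$ is non-clashing for $\mathcal{B}$ if for every pair of distinct $B_1,B_2\in\mathcal{B}$ there is $w\in T(B_1)\cup T(B_2)$ with $w\notin B_1\cap B_2$. Two components $H,H'\in\mathcal{H}$ are twin-blocks, $H\sim_{\mathcal{B}}H'$, if there is an isomorphism $\alpha$ from $H$ to $H'$ such that (i) for each $u\in V(H)$ and $x\in X$, $ux\in E(G)$ iff $\alpha(u)x\in E(G)$, and (ii) for each $u\in V(H)$ and $r\in\mathbb{N}$, $B_r(u)\in\mathcal{B}$ iff $B_r(\alpha(u))\in\mathcal{B}$. For each pair $H\sim_{\mathcal{B}}H'$ one such isomorphism $\alpha_{H,H'}$ is fixed (the canonical isomorphism). For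 $v\in V(H)$, $[v]_{\sim_{\mathcal{B}}}=\{\alpha_{H,H'}(v) : H'\sim_{\mathcal{B}}H\}$. *)

(* Defs.v *)
(* finite simple graphs as symmetric irreflexive relations on a finType.
   boolp (MathComp-Analysis classical layer) is used only to turn the Prop-valued
   class membership into a finite set. *)
From mathcomp Require Import all_boot.
From mathcomp Require Import boolp.
Set Implicit Arguments. Unset Strict Implicit. Unset Printing Implicit Defensive.

Section Defs.
Variable V : finType.
Variable e : rel V.

Fixpoint ball (r : nat) (v : V) : {set V} :=
  match r with
  | 0 => [set v]
  | r'.+1 => ball r' v :|: [set w | [exists y in ball r' v, e y w]]
  end.

Definition edge_out (X : {set V}) : rel V :=
  [rel a b | [&& e a b, a \notin X & b \notin X]].

Definition is_comp (X C : {set V}) : Prop :=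
  exists2 x, x \in C & (x \notin X) /\ C = [set y | connect (edge_out X) x y].

Definition twin_iso (B : {set {set V}}) (X H H' : {set V}) (alpha : V -> V) : Prop :=
  [/\ {in H &, injective alpha},
      alpha @: H = H',
      {in H &, forall x y, e x y = e (alpha x) (alpha y)},
      (forall u x, u \in H -> x \in X -> e u x = e (alpha u) x) &
      (forall u r, u \in H -> (ball r u \in B) = (ball r (alpha u) \in B))].

Definition twin_blocks (B : {set {set V}}) (X H H' : {set V}) : Prop :=
  exists alpha : V -> V, twin_iso B X H H' alpha.

(* [v]_{~_B} for v in H, w.r.t. the fixed canonical isomorphisms canon H H' *)
Definition twin_class (B : {set {set V}}) (X : {set V})
    (canon : {set V} -> {set V} -> V -> V) (H : {set V}) (v : V) : {set V} :=
  [set y | `[< exists H', [/\ is_comp X H', twin_blocks B X H H' & y = canon H H' v] >]].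

Definition positive_map (B : {set {set V}}) (T : {set V} -> {set V}) : Prop :=
  forall b, b \in B -> T b \subset b.

Definition non_clashing (B : {set {set V}}) (T : {set V} -> {set V}) : Prop :=
  forall b1 b2, b1 \in B -> b2 \in B -> b1 != b2 ->
    exists2 w, w \in T b1 :|: T b2 & w \notin b1 :&: b2.

End Defs.

(* Main.v *)
Require Import Defs.
From mathcomp Require Import all_boot.
From mathcomp Require Import boolp.
Set Implicit Arguments. Unset Strict Implicit. Unset Printing Implicit Defensive.

Lemma claim (V : finType) (e : rel V) (e_sym : symmetric e) (X H0 Hj : {set V})
  (aj ai : V -> V) (c : V) :
  (forall y, y \in H0 -> aj y \in Hj) ->
  {in H0 &, forall x y, e x y = e (aj x) (aj y)} ->
  {in H0 &, forall x y, e x y = e (ai x) (ai y)} ->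
  (forall u x, u \in H0 -> x \in X -> e u x = e (aj u) x) ->
  (forall u x, u \in H0 -> x \in X -> e u x = e (ai u) x) ->
  (forall w y', w \in Hj -> y' \notin X -> e y' w -> y' \in Hj) ->
  Hj \subset aj @: H0 ->
  c \notin Hj -> forall R y, y \in H0 -> aj y \in ball e R c -> ai y \in ball e R c.
Proof.
move=> ajH ej ei xj xi clos sur cn R; elim: R => [|R IH] y yH /=.
  rewrite in_set1 => /eqP E; have := ajH y yH; rewrite E => cH.
  by rewrite cH in cn.
rewrite !in_setU; case/orP => [/(IH _ yH) -> //|].
rewrite in_set => /existsP [y' /andP [y'B ey']].
apply/orP; right; rewrite in_set; apply/existsP.
case y'X: (y' \in X).
  exists y'; rewrite y'B /=.
  by rewrite e_sym -xi // xj // -e_sym.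
have y'H : y' \in Hj by apply: (clos (aj y)) => //; [exact: ajH | rewrite y'X].
have /imsetP [y'' y''H E] := subsetP sur _ y'H.
exists (ai y''); rewrite (IH y'') ?y''H -?E //=.
by rewrite -ei // ej // -E.
Qed.

Lemma comp_notin (V : finType) (e : rel V) X H w :
  is_comp e X H -> w \in H -> w \notin X.
Proof.
case=> x _ [xX ->]; rewrite in_set => /connectP [p].
elim/last_ind: p => [|p a _] /=.
  by move=> _ ->.
rewrite rcons_path last_rcons => /andP [_ /andP [_ /andP [_ aX]]] ->; exact: aX.
Qed.

Lemma comp_closed (V : finType) (e : rel V) (e_sym : symmetric e) X H w y' :
  is_comp e X H -> w \in H -> y' \notin X -> e y' w -> y' \in H.
Proof.
move=> HC wH y'X ey; have wX := comp_notin HC wH.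
case: HC wH => x _ [xX ->]; rewrite !in_set => cw.
apply: (connect_trans cw); apply: connect1; rewrite /edge_out /= wX y'X e_sym ey.
by [].
Qed.

Lemma comp_eq (V : finType) (e : rel V) (e_sym : symmetric e) X H H' c :
  is_comp e X H -> is_comp e X H' -> c \in H -> c \in H' -> H = H'.
Proof.
have sym : connect_sym (edge_out e X).
  apply: sym_connect_sym => a b; rewrite /edge_out /= e_sym.
  by case: (e b a); case: (a \in X); case: (b \in X).
case=> x _ [_ ->]; case=> x' _ [_ ->]; rewrite !in_set => cx cx'.
apply/setP => y; rewrite !in_set.
by rewrite (same_connect sym cx) (same_connect sym cx').
Qed.

Theorem lemma9 (V : finType) (e : rel V)
    (e_sym : symmetric e) (e_irr : irreflexive e)
    (B : {set {set V}}) (Hball : forall b, b \in B -> exists r v, b = ball e r v)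
    (X : {set V})
    (canon : {set V} -> {set V} -> V -> V)
    (Hcanon : forall H H', is_comp e X H -> is_comp e X H' ->
        twin_blocks e B X H H' -> twin_iso e B X H H' (canon H H'))
    (u : V) (r : nat) (HB : ball e r u \in B)
    (T : {set V} -> {set V})
    (Tpos : positive_map B T) (Tnc : non_clashing B T)
    (H0 : {set V}) (v : V) (HH0 : is_comp e X H0) (Hv : v \in H0)
    (Hcard : 3 <= #|twin_class e B X canon H0 v :&: T (ball e r u)|) :
  exists2 z, z \in twin_class e B X canon H0 v :&: T (ball e r u) &
    let T' := fun b => if b == ball e r u then T b :\ z else T b in
    positive_map B T' /\ non_clashing B T'.
Proof.
set S := _ :&: _ in Hcard *.
have [z zS] : exists z, z \in S.
  by apply/set0Pn; rewrite -card_gt0; apply: leq_trans Hcard.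
have : 2 <= #|S :\ z| by rewrite (cardsD1 z) zS in Hcard.
move=> H2.
have [z2 z2S] : exists z2, z2 \in S :\ z.
  by apply/set0Pn; rewrite -card_gt0; apply: leq_trans H2.
have : 1 <= #|S :\ z :\ z2| by rewrite (cardsD1 z2) z2S in H2.
rewrite card_gt0 => /set0Pn [z3 z3S].
rewrite !in_setD1 in z3S z2S.
case/and3P: z3S => [z3z2 z3z z3S]; case/andP: z2S => [z2z z2S].
have key : forall b2, b2 \in B -> z2 \in b2 -> z3 \in b2 -> z \in b2.
  move=> b2 /Hball [r2 [c ->]] z2b z3b.
  have getc : forall y, y \in S -> exists H, [/\ is_comp e X H,
      twin_iso e B X H0 H (canon H0 H) & y = canon H0 H v].
    move=> y; rewrite in_setI in_set => /andP [/asboolP [H [HC tb ->]] _].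
    by exists H; split => //; apply: Hcanon.
  have [Hz [HzC [_ imz ez xz _] Ez]] := getc z zS; rewrite Ez.
  have [H2' [H2C [_ im2 e2 x2 _] E2]] := getc z2 z2S.
  have [H3' [H3C [_ im3 e3 x3 _] E3]] := getc z3 z3S.
  have gen : forall Hj, is_comp e X Hj -> canon H0 Hj @: H0 = Hj ->
      {in H0 &, forall x y, e x y = e (canon H0 Hj x) (canon H0 Hj y)} ->
      (forall u x, u \in H0 -> x \in X -> e u x = e (canon H0 Hj u) x) ->
      c \notin Hj -> canon H0 Hj v \in ball e r2 c -> canon H0 Hz v \in ball e r2 c.
    move=> Hj HjC imj ej xj cn.
    have ajH : forall y, y \in H0 -> canon H0 Hj y \in Hj.
      by move=> y yH; rewrite -[in Z in _ \in Z]imj; apply: imset_f.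
    have cl : forall w y', w \in Hj -> y' \notin X -> e y' w -> y' \in Hj.
      by move=> w y'; apply: comp_closed.
    have sur : Hj \subset canon H0 Hj @: H0 by apply/subsetP => w; rewrite -{1}imj.
    exact: (claim e_sym ajH ej ez xj xz cl sur cn Hv).
  case c2: (c \in H2'); last first.
    by apply: (gen H2') => //; [rewrite c2 | rewrite -E2].
  case c3: (c \in H3'); last first.
    by apply: (gen H3') => //; [rewrite c3 | rewrite -E3].
  have EH := comp_eq e_sym H2C H3C c2 c3.
  by move: z3z2; rewrite E2 E3 EH eqxx.
have Tz : forall b, b \in B -> T b \subset b := Tpos.
have main : forall b2, b2 \in B -> ball e r u != b2 ->
    exists2 w, w \in (T (ball e r u) :\ z) :|: T b2 & w \notin ball e r u :&: b2.
  move=> b2 b2B ne.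
  have [w wT wn] := Tnc _ _ HB b2B ne.
  case wz: (w == z); last first.
    exists w => //; move: wT; rewrite !in_setU in_setD1 wz /=; by [].
  move/eqP: wz => wz; subst w.
  have zb : z \in ball e r u.
    by apply: (subsetP (Tpos _ HB)); move: zS; rewrite in_setI => /andP [].
  have zb2 : z \notin b2 by move: wn; rewrite in_setI zb.
  case: (boolP [exists w, (w \in (T (ball e r u) :\ z) :|: T b2) &&
      (w \notin ball e r u :&: b2)]).
    by case/existsP => w /andP [h1 h2]; exists w.
  rewrite negb_exists => /forallP Hn.
  have inb2 : forall y, y \in S -> y != z -> y \in b2.
    move=> y yS yz; have := Hn y; rewrite in_setU in_setD1 yz /=.
    have yT : y \in T (ball e r u) by move: yS; rewrite in_setI => /andP [].
    by rewrite yT /= negbK in_setI => /andP [].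

  by rewrite (key b2 b2B (inb2 _ z2S z2z) (inb2 _ z3S z3z)) in zb2.
exists z => //; split.
  move=> b bB; case: ifP => _; last exact: Tpos.
  by apply: subset_trans (Tpos _ bB); apply: subsetDl.
move=> b1 b2 b1B b2B ne.
case: ifP => [/eqP E1|n1]; case: ifP => [/eqP E2|n2].
- by rewrite E1 E2 eqxx in ne.
- by subst b1; apply: main.
- subst b2; have ne' : ball e r u != b1 by rewrite eq_sym.
  have [w w1 w2] := main b1 b1B ne'.
  by exists w; [rewrite setUC | rewrite setIC].
- exact: Tnc.
Qed.
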